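(* Let $F$ be an algebraically closed field with $\mathrm{char}\,F=2$. Then the maximal Mathieu subspaces of $M_2(F)$ are exactly the following: (i) the $2$-dimensional subspaces $V\subseteq I_2^\perp=\{b\in M_2(F):\mathrm{Tr}(b)=0\}$ with $I_2\notin V$; (ii) the subspaces $F(\lambda_1e_1+\lambda_2e_2)+e_1M_2(F)e_2$, where $e_1,e_2$ are nonzero idempotents with $e_1+e_2=I_2$ and $\lambda_1,\lambda_2\in F$ are distinct, nonzero, with $\lambda_1+\lambda_2\ne0$.
   Context: Let $\mathcal A$ be an associative algebra over a field $F$. An $F$-subspace $M\subseteq\mathcal A$ is a Mathieu subspace (MS) of $\mathcal A$ if for all $a,b,c\in\mathcal A$ such that $a^m\in M$ for all $m\ge 1$, there exists $N$ (depending on $a,b,c$) such that $ba^mc\in M$ for all $m\ge N$. A maximal MS of $\mathcal A$ is a proper MS of $\mathcal A$ that is not properly contained in any proper MS of $\mathcal A$. *)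

(* Defs.v *)
From HB Require Import structures.
From mathcomp Require Import all_boot all_order all_algebra all_field.
Set Implicit Arguments. Unset Strict Implicit. Unset Printing Implicit Defensive.
Import GRing.Theory.
Local Open Scope ring_scope.

Definition mathieu_subspace (F : fieldType) (A : falgType F) (M : {vspace A}) : Prop :=
  forall a b c : A,
    (forall m : nat, (1 <= m)%N -> a ^+ m \in M) ->
    exists N : nat, forall m : nat, (N <= m)%N -> b * a ^+ m * c \in M.

Definition maximal_mathieu_subspace (F : fieldType) (A : falgType F) (M : {vspace A}) : Prop :=
  [/\ mathieu_subspace M, M != fullv &
      forall W : {vspace A}, mathieu_subspace W -> W != fullv -> (M <= W)%VS -> W = M].

Definition corner_space (F : fieldType) (A : falgType F) (e1 e2 : A) : {vspace A} :=
  (linfun (fun x : A => e1 * x * e2) @: fullv)%VS.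

(* Main.v *)
Require Import Defs.
From HB Require Import structures.
From mathcomp Require Import all_boot all_order all_algebra all_field.
From mathcomp Require Import ring zify.
From Stdlib Require Import Classical.
Set Implicit Arguments. Unset Strict Implicit. Unset Printing Implicit Defensive.
Import GRing.Theory.
Local Open Scope ring_scope.





Lemma det2 (R : comNzRingType) (A : 'M[R]_2) : \det A = A 0 0 * A 1 1 - A 0 1 * A 1 0.
Proof.
rewrite (expand_det_row _ 0) !big_ord_recl big_ord0 /cofactor !det_mx11 !mxE /=.
have e1 : lift 0 0 = 1 :> 'I_2 by apply: val_inj.
have e2 : lift (lift ord0 ord0) 0 = 0 :> 'I_2 by apply: val_inj.
have e3 : lift ord0 ord0 = 1 :> 'I_2 by apply: val_inj.
have e4 : lift ord0 0 = 1 :> 'I_2 by apply: val_inj.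
have e5 : ord0 = 0 :> 'I_2 by apply: val_inj.
rewrite ?e1 ?e2 ?e3 ?e4 ?e5 /=.
have e6 : lift 1 0 = 0 :> 'I_2 by apply: val_inj.
rewrite e6 expr0 expr1; ring.
Qed.

Lemma tr2 (R : comNzRingType) (A : 'M[R]_2) : \tr A = A 0 0 + A 1 1.
Proof. by rewrite /mxtrace !big_ord_recl big_ord0 addr0; congr (A _ _ + A _ _); apply: val_inj. Qed.

Lemma mul2E (R : comNzRingType) (A B : 'M[R]_2) i j : (A * B) i j = A i 0 * B 0 j + A i 1 * B 1 j.
Proof. by rewrite -mulmxE mxE !big_ord_recl big_ord0 addr0; congr (A _ _ * B _ _ + A _ _ * B _ _); apply: val_inj. Qed.

Lemma ord2P (i : 'I_2) : i = 0 \/ i = 1.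
Proof. case: i => [[|[|n]] Hn]; [left|right|by []]; exact: val_inj. Qed.

Lemma e01 : (0 == 1 :> 'I_2) = false. Proof. by []. Qed.
Lemma e10 : (1 == 0 :> 'I_2) = false. Proof. by []. Qed.



Lemma CH2 (R : comNzRingType) (A : 'M[R]_2) : A * A = \tr A *: A - \det A *: 1.
Proof. apply/matrixP => i j; have [->|->] := ord2P i; have [->|->] := ord2P j;
  rewrite ?det2 ?tr2 !(mul2E, mxE, eqxx, e01, e10) /=; ring. Qed.

Lemma eze (R : comNzRingType) (e z : 'M[R]_2) : e * z * e = \tr (e * z) *: e - \det e *: (\tr z *: 1 - z).
Proof. apply/matrixP => i j; have [->|->] := ord2P i; have [->|->] := ord2P j;
  rewrite ?det2 ?tr2 !(mul2E, mxE, eqxx, e01, e10) /=; ring. Qed.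

Lemma detD2 (R : comNzRingType) (x y : 'M[R]_2) b : \det (x + b *: y) = \det x + b * (\tr x * \tr y - \tr (x * y)) + b ^+ 2 * \det y.
Proof. rewrite !det2 !tr2 !(mul2E, mxE); ring. Qed.

Lemma mul_delta2 (R : comNzRingType) (a b : 'M[R]_2) (i j k l : 'I_2) : (a * delta_mx j k * b) i l = a i j * b k l.
Proof.
rewrite !mul2E !mxE.
have [->|->] := ord2P j; have [->|->] := ord2P k; rewrite ?eqxx ?e01 ?e10 /=; ring.
Qed.


Lemma delta_e (R : comNzRingType) (e : 'M[R]_2) i j k l :
  delta_mx k i * e * delta_mx j l = e i j *: delta_mx k l.
Proof.
apply/matrixP => p q; rewrite !(mul2E, mxE).
have [->|->] := ord2P p; have [->|->] := ord2P q; have [->|->] := ord2P i;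
have [->|->] := ord2P j; have [->|->] := ord2P k; have [->|->] := ord2P l;
rewrite ?eqxx ?e01 ?e10 /=; ring.
Qed.

Definition idemfree (F : fieldType) (M : {vspace 'M[F]_2}) :=
  forall e, e \in M -> e * e = e -> e = 0.

Lemma idem_tr (F : fieldType) (M : {vspace 'M[F]_2}) x :
  idemfree M -> x \in M -> \det x = 0 -> \tr x = 0.
Proof.
move=> hM xM dx; apply/eqP; apply/negP => /negP tx.
set e := (\tr x)^-1 *: x.
have eM : e \in M by rewrite memvZ.
have ee : e * e = e.
  rewrite /e -scalerAl -scalerAr CH2 dx scale0r subr0 !scalerA.
  by rewrite -mulrA mulVf ?mulr1.
have := hM e eM ee; rewrite /e => /eqP; rewrite scaler_eq0 invr_eq0 (negPf tx) /=.
by move/eqP => x0; move: tx; rewrite x0 linear0 eqxx.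
Qed.

Lemma idem_one (F : fieldType) (M : {vspace 'M[F]_2}) :
  idemfree M -> (1 : 'M[F]_2) \notin M.
Proof. by move=> hM; apply/negP => /hM /(_ (mulr1 _)) /eqP; rewrite oner_eq0. Qed.

Lemma idemfree_sub (F : fieldType) (U M : {vspace 'M[F]_2}) :
  (U <= M)%VS -> idemfree M -> idemfree U.
Proof. by move=> /subvP sUM hM e /sUM; apply: hM. Qed.

Lemma ms_of_idemfree (F : fieldType) (M : {vspace 'M[F]_2}) :
  idemfree M -> mathieu_subspace M.
Proof.
move=> hM a b c ha.
have a1 := ha 1%N isT; have a2 := ha 2%N isT.
rewrite expr1 in a1; rewrite expr2 in a2.
have h2 := CH2 a.
have [d0|dn0] := eqVneq (\det a) 0.
  have [t0|tn0] := eqVneq (\tr a) 0.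
    exists 2%N => m hm; rewrite -(subnK hm) exprD expr2 h2 t0 d0 !scale0r subr0 !mulr0 ?mul0r.
    exact: mem0v.
  by move: tn0; rewrite (idem_tr hM a1 d0) eqxx.
exfalso; move: (idem_one hM); apply/negP/negPn.
have -> : (1 : 'M[F]_2) = (\det a)^-1 *: (\tr a *: a - a * a).
  by rewrite h2 opprB addrC subrK scalerA mulVf // scale1r.
by rewrite memvZ // memvB // memvZ.
Qed.

Lemma idemfree_of_ms (F : fieldType) (M : {vspace 'M[F]_2}) :
  mathieu_subspace M -> M != fullv -> idemfree M.
Proof.
move=> hM nf e eM ee; apply/eqP; apply/negP => /negP en0.
have epow m : (1 <= m)%N -> e ^+ m = e.
  elim: m => // [[|m]] IH _; first by rewrite expr1.
  by rewrite exprS IH.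
have bec b c : b * e * c \in M.
  have [N HN] := hM e b c (fun m hm => eq_ind_r (fun z => z \in M) eM (epow m hm)).
  by move: (HN N.+1 (leqnSn N)); rewrite epow.
have [i [j eij]] : exists i j, e i j != 0.
  case: (boolP [exists i, exists j, e i j != 0]) => [/existsP[i /existsP[j eij]]|/existsPn H]; first by exists i, j.
  exfalso; apply/(negP en0)/eqP/matrixP => i j; rewrite mxE.
  by move: (H i) => /existsPn /(_ j) /negPn /eqP.
have dM k l : delta_mx k l \in M.
  have -> : delta_mx k l = (e i j)^-1 *: (delta_mx k i * e * delta_mx j l).
    by rewrite delta_e scalerA mulVf ?scale1r.
  by rewrite memvZ.
move/negP: nf; apply; rewrite eqEsubv subvf /=; apply/subvP => A _.
rewrite (matrix_sum_delta A); apply: memv_suml => k _; apply: memv_suml => l _.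
exact: memvZ.
Qed.


Lemma idemfree_tr0 (F : fieldType) (M : {vspace 'M[F]_2}) :
  (forall b, b \in M -> \tr b = 0) -> (1 : 'M[F]_2) \notin M -> idemfree M.
Proof.
move=> htr n1 e eM ee.
have h := CH2 e; rewrite ee htr // scale0r sub0r in h.
have [d0|dn0] := eqVneq (\det e) 0; first by rewrite h d0 scale0r oppr0.
move/negP: n1; case; move: h dn0; set d := \det e => h dn0.
have -> : (1 : 'M[F]_2) = (- d)^-1 *: e.
  by rewrite h -scaleNr scalerA mulVf ?scale1r ?oppr_eq0.
exact: memvZ.
Qed.

Lemma dim_mx2 (F : fieldType) (W : {vspace 'M[F]_2}) : (\dim W <= 4)%N.
Proof. by have := dimvS (subvf W); rewrite dimvf dim_matrix. Qed.

Lemma meet_nonzero (F : fieldType) (W U : {vspace 'M[F]_2}) :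
  (3 <= \dim W)%N -> (2 <= \dim U)%N -> exists2 z, z \in (W :&: U)%VS & z != 0.
Proof.
move=> hW hU; exists (vpick (W :&: U)%VS); first exact: memv_pick.
rewrite vpick0 -dimv_eq0; have := dimv_sum_cap W U; have := dim_mx2 (W + U)%VS.
move=> h1 h2; apply/eqP => h0; rewrite h0 in h2; lia.
Qed.

Definition simp := (mulr0, mul0r, mulr1, mul1r, addr0, add0r, subrr, subr0, sub0r, oppr0).

Lemma dim_line2 (F : fieldType) (u v : 'M[F]_2) : u != 0 -> v != 0 ->
  (forall k m, k *: u = m *: v -> k *: u = 0) -> \dim (<[u]> + <[v]>)%VS = 2.
Proof.
move=> un vn huv; rewrite dimv_disjoint_sum ?dim_vline ?un ?vn //.
apply/eqP; rewrite -subv0; apply/subvP => z /memv_capP [/vlineP[k ->] /vlineP[m e]].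
by rewrite memv0 (huv k m e).
Qed.

Lemma delta_neq0 (F : fieldType) (i j : 'I_2) : delta_mx i j != 0 :> 'M[F]_2.
Proof. by apply/negP => /eqP/matrixP/(_ i j); rewrite !mxE !eqxx /=; apply/eqP; rewrite oner_eq0. Qed.

Lemma no3 (F : fieldType) (ch : 2%N \in [pchar F]) (W : {vspace 'M[F]_2}) :
  idemfree W -> (\dim W <= 2)%N.
Proof.
move=> hW; rewrite leqNgt; apply/negP => h3.
have tW x := @idem_tr F W x hW.
have i1 : forall k m : F, k *: (delta_mx 0 0 : 'M[F]_2) = m *: (delta_mx 0 1 : 'M[F]_2) -> k *: (delta_mx 0 0 : 'M[F]_2) = 0.
  move=> k m /matrixP/(_ 0 0); rewrite !mxE !eqxx /= mulr1 mulr0 => ->; exact: scale0r.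
have E01 : delta_mx 0 1 \in W.
  have [z /memv_capP [zW /memv_addP [u /vlineP[a ->] [v /vlineP [b ->] ez]]] nz] :=
    meet_nonzero h3 (eq_leq (esym (@dim_line2 F (delta_mx 0 0) (delta_mx 0 1)
      (delta_neq0 _ _ _) (delta_neq0 _ _ _) i1))).
  have a0 : a = 0.
    have := tW z zW; rewrite ez det2 tr2 !mxE !eqxx /= => h.
    by rewrite !simp in h; apply: h.
  rewrite a0 scale0r add0r in ez.
  have bn : b != 0 by apply: contraNneq nz => b0; rewrite ez b0 scale0r.
  have -> : delta_mx 0 1 = b^-1 *: z by rewrite ez scalerA mulVf ?scale1r.
  exact: memvZ.
have i2 : forall k m : F, k *: (delta_mx 1 0 : 'M[F]_2) = m *: (delta_mx 1 1 : 'M[F]_2) -> k *: (delta_mx 1 0 : 'M[F]_2) = 0.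
  move=> k m /matrixP/(_ 1 0); rewrite !mxE !eqxx /= mulr1 mulr0 => ->; exact: scale0r.
have E10 : delta_mx 1 0 \in W.
  have [z /memv_capP [zW /memv_addP [u /vlineP[a ->] [v /vlineP [b ->] ez]]] nz] :=
    meet_nonzero h3 (eq_leq (esym (@dim_line2 F (delta_mx 1 0) (delta_mx 1 1)
      (delta_neq0 _ _ _) (delta_neq0 _ _ _) i2))).
  have b0 : b = 0.
    have := tW z zW; rewrite ez det2 tr2 !mxE !eqxx /= => h.
    by rewrite !simp in h; apply: h.
  rewrite b0 scale0r addr0 in ez.
  have an : a != 0 by apply: contraNneq nz => a0; rewrite ez a0 scale0r.
  have -> : delta_mx 1 0 = a^-1 *: z by rewrite ez scalerA mulVf ?scale1r.
  exact: memvZ.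
pose u3 : 'M[F]_2 := delta_mx 0 0 + delta_mx 1 0.
pose v3 : 'M[F]_2 := delta_mx 0 1 + delta_mx 1 1.
have i3 : forall k m : F, k *: u3 = m *: v3 -> k *: u3 = 0.
  move=> k m /matrixP/(_ 0 0); rewrite !mxE !eqxx /= !simp => ->; exact: scale0r.
have u3n : u3 != 0 by apply/negP => /eqP/matrixP/(_ 0 0); rewrite !mxE !eqxx /= !simp; apply/eqP; rewrite oner_eq0.
have v3n : v3 != 0 by apply/negP => /eqP/matrixP/(_ 0 1); rewrite !mxE !eqxx /= !simp; apply/eqP; rewrite oner_eq0.
have [z /memv_capP [zW /memv_addP [u /vlineP[a ->] [v /vlineP [b ->] ez]]] nz] :=
  meet_nonzero h3 (eq_leq (esym (@dim_line2 F u3 v3 u3n v3n i3))).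
have ab : a = - b.
  have := tW z zW; rewrite ez det2 tr2 !mxE !eqxx /= !simp => h.
  by apply/eqP; rewrite -addr_eq0; apply/eqP; apply: h; ring.
have bn : b != 0 by apply: contraNneq nz => b0; rewrite ez ab b0 oppr0 !scale0r addr0.
move/negP: (idem_one hW); case.
have -> : (1 : 'M[F]_2) = b^-1 *: z - delta_mx 0 1 + delta_mx 1 0.
  apply/matrixP => i j; rewrite ez ab.
  have [->|->] := ord2P i; have [->|->] := ord2P j; rewrite !mxE ?eqxx /= !simp; try field => //.
  by rewrite mulrN mulVf // oppr_pchar2.
by rewrite memvD // memvB // memvZ.
Qed.


Lemma cornerP (F : fieldType) (e1 e2 v : 'M[F]_2) :
  reflect (exists u, v = e1 * u * e2) (v \in corner_space e1 e2).
Proof.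
pose f (x : 'M[F]_2) := e1 * x * e2.
have lin_f : linear f.
  by move=> k u w; rewrite /f mulrDr mulrDl -scalerAr -scalerAl.
pose flM := GRing.isLinear.Build _ _ _ _ f lin_f.
pose fL : {linear 'M[F]_2 -> 'M[F]_2} := HB.pack f flM.
have hL u : linfun (fun x : 'M[F]_2 => e1 * x * e2) u = e1 * u * e2 := lfunE fL u.
rewrite /corner_space; apply: (iffP memv_imgP) => [[u _ ->]|[u ->]].
  by exists u; rewrite hL.
by exists u; [exact: memvf | rewrite hL].
Qed.

Lemma ii_idemfree (F : fieldType) (e1 e2 : 'M[F]_2) (l1 l2 : F) :
  e1 * e1 = e1 -> e2 * e2 = e2 -> e1 + e2 = 1 -> e1 != 0 -> e2 != 0 ->
  l1 != l2 -> l1 != 0 -> l2 != 0 ->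
  idemfree (<[l1 *: e1 + l2 *: e2]> + corner_space e1 e2)%VS.
Proof.
move=> ee1 ee2 es e1n e2n l12 l1n l2n.
have de2 : e2 = 1 - e1 by rewrite -es addrC addKr.
have e12 : e1 * e2 = 0 by rewrite de2 mulrBr mulr1 ee1 subrr.
have e21 : e2 * e1 = 0 by rewrite de2 mulrBl mul1r ee1 subrr.
move=> z /memv_addP [s /vlineP [a ->] [n /cornerP [u ->] ->]] zz.
set N := e1 * u * e2 in zz *.
have hNe1 : N * e1 = 0 by rewrite /N -!mulrA e21 !mulr0.
have he2N : e2 * N = 0 by rewrite /N !mulrA e21 !mul0r.
have he1N : e1 * N = N by rewrite /N !mulrA ee1.
have hNe2 : N * e2 = N by rewrite /N -!mulrA ee2.
have hNN : N * N = 0 by rewrite {1}/N -!mulrA he2N !mulr0.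
set y := _ + N in zz *.
have hE1z : e1 * y = (a * l1) *: e1 + N.
  by rewrite /y mulrDr he1N -scalerAr mulrDr -!scalerAr ee1 e12 scaler0 addr0 scalerA.
have hzE1 : y * e1 = (a * l1) *: e1.
  by rewrite /y mulrDl hNe1 addr0 -scalerAl mulrDl -!scalerAl ee1 e21 scaler0 addr0 scalerA.
have hE2z : e2 * y = (a * l2) *: e2.
  by rewrite /y mulrDr he2N addr0 -scalerAr mulrDr -!scalerAr ee2 e21 scaler0 add0r scalerA.
have hzE2 : y * e2 = (a * l2) *: e2 + N.
  by rewrite /y mulrDl hNe2 -scalerAl mulrDl -!scalerAl ee2 e12 scaler0 add0r scalerA.
have h1 : ((a * l1) ^+ 2 - a * l1) *: e1 = 0.
  have : e1 * (y * y) * e1 = e1 * y * e1 by rewrite zz.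
  rewrite !mulrA -(mulrA (e1 * y)) hE1z hzE1.
  rewrite !mulrDl -!scalerAl -!scalerAr ee1 hNe1 !scaler0 !addr0 !scalerA => h.
  by rewrite scalerBl expr2 h subrr.
have h2 : ((a * l2) ^+ 2 - a * l2) *: e2 = 0.
  have : e2 * (y * y) * e2 = e2 * y * e2 by rewrite zz.
  rewrite !mulrA -(mulrA (e2 * y)) hE2z hzE2.
  rewrite !mulrDr -!scalerAl -!scalerAr ee2 he2N !scaler0 !addr0 !scalerA => h.
  by rewrite scalerBl expr2 h subrr.
have [a0|an] := eqVneq a 0.
  move: zz; rewrite /y a0 scale0r add0r hNN => <-; done.
exfalso.
have s1 : a * l1 = 1.
  move/eqP: h1; rewrite scaler_eq0 (negPf e1n) orbF subr_eq0 expr2 => /eqP h.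
  by apply: (mulfI (mulf_neq0 an l1n)); rewrite h mulr1.
have s2 : a * l2 = 1.
  move/eqP: h2; rewrite scaler_eq0 (negPf e2n) orbF subr_eq0 expr2 => /eqP h.
  by apply: (mulfI (mulf_neq0 an l2n)); rewrite h mulr1.
by move: l12; rewrite -s2 in s1; rewrite (mulfI an s1) eqxx.
Qed.

Lemma mx_nz (F : fieldType) (A : 'M[F]_2) : A != 0 -> exists i j, A i j != 0.
Proof.
move=> An.
case: (boolP [exists i, exists j, A i j != 0]) => [/existsP[i /existsP[j eij]]|/existsPn H]; first by exists i, j.
exfalso; apply/(negP An)/eqP/matrixP => i j; rewrite mxE.
by move: (H i) => /existsPn /(_ j) /negPn /eqP.
Qed.

Lemma prime2 (F : fieldType) (a b : 'M[F]_2) : a != 0 -> b != 0 -> exists x, a * x * b != 0.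
Proof.
move=> /mx_nz [i [j aij]] /mx_nz [k [l bkl]]; exists (delta_mx j k).
apply/negP => /eqP/matrixP/(_ i l); rewrite mul_delta2 mxE => /eqP.
by rewrite mulf_eq0 (negPf aij) (negPf bkl).
Qed.

Lemma ii_dim (F : fieldType) (ch : 2%N \in [pchar F]) (e1 e2 : 'M[F]_2) (l1 l2 : F) :
  e1 * e1 = e1 -> e2 * e2 = e2 -> e1 + e2 = 1 -> e1 != 0 -> e2 != 0 ->
  l1 != l2 -> l1 != 0 -> l2 != 0 ->
  \dim (<[l1 *: e1 + l2 *: e2]> + corner_space e1 e2)%VS = 2.
Proof.
move=> ee1 ee2 es e1n e2n l12 l1n l2n.
have hid := ii_idemfree ee1 ee2 es e1n e2n l12 l1n l2n.
apply/eqP; rewrite eqn_leq (no3 ch hid) /=.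
have de2 : e2 = 1 - e1 by rewrite -es addrC addKr.
have e12 : e1 * e2 = 0 by rewrite de2 mulrBr mulr1 ee1 subrr.
have e21 : e2 * e1 = 0 by rewrite de2 mulrBl mul1r ee1 subrr.
set s := l1 *: e1 + l2 *: e2.
have hs : e1 * s * e1 = l1 *: e1.
  by rewrite /s mulrDr -!scalerAr ee1 e12 scaler0 addr0 -scalerAl ee1.
have [x nx] := prime2 e1n e2n.
set n0 := e1 * x * e2 in nx.
have hn : e1 * n0 * e1 = 0 by rewrite /n0 -!mulrA e21 !mulr0.
have sn : s != 0.
  apply/negP => /eqP s0; move: hs; rewrite s0 mulr0 mul0r => /esym/eqP.
  by rewrite scaler_eq0 (negPf l1n) (negPf e1n).
have ind : forall k m : F, k *: s = m *: n0 -> k *: s = 0.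
  move=> k m h.
  have : e1 * (k *: s) * e1 = e1 * (m *: n0) * e1 by rewrite h.
  rewrite -!scalerAr -!scalerAl hs hn scaler0 scalerA => /eqP.
  rewrite scaler_eq0 (negPf e1n) orbF mulf_eq0 (negPf l1n) orbF => /eqP ->.
  exact: scale0r.
rewrite -(dim_line2 sn nx ind); apply: dimvS.
rewrite subv_add addvSl /=; apply: subv_trans (addvSr _ _).
by rewrite -memvE; apply/cornerP; exists x.
Qed.


Lemma idem_det (F : fieldType) (e : 'M[F]_2) : e * e = e -> e != 1 -> \det e = 0.
Proof.
move=> ee e1; have h : \det e * \det e = \det e by rewrite -det_mulmx mulmxE ee.
have [//|dn] := eqVneq (\det e) 0; exfalso; move/negP: e1; apply.
have d1 : \det e = 1 by apply: (mulfI dn); rewrite h mulr1.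
have eu : e \is a GRing.unit by rewrite unitmxE d1 unitr1.
by have := mulKr eu e; rewrite ee mulVr // => h1; rewrite -h1.
Qed.

Lemma CHt (R : comNzRingType) (x : 'M[R]_2) t :
  (x - t *: 1) * (x - (\tr x - t) *: 1) = (t * (\tr x - t) - \det x) *: 1.
Proof.
apply/matrixP => i j; have [->|->] := ord2P i; have [->|->] := ord2P j;
  rewrite ?det2 ?tr2 !(mul2E, mxE, eqxx, e01, e10) /=; ring.
Qed.

Lemma quad_root (F : closedFieldType) (b c : F) : exists t, t ^+ 2 = b * t + c.
Proof.
have [t ht] := @solve_monicpoly F 2 (nth 0 [:: c; b]) isT.
by exists t; rewrite ht !big_ord_recl big_ord0 /= expr0 expr1 mulr1 addr0 addrC.
Qed.

Lemma eigen (F : closedFieldType) (ch : 2%N \in [pchar F]) (x : 'M[F]_2) :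
  \tr x != 0 -> \det x != 0 ->
  exists (e1 e2 : 'M[F]_2) (l1 l2 : F),
    [/\ e1 != 0, e2 != 0, e1 * e1 = e1, e2 * e2 = e2 & e1 + e2 = 1] /\
    [/\ l1 != l2, l1 != 0, l2 != 0, l1 + l2 != 0 & x = l1 *: e1 + l2 *: e2] /\
    (e1 = (l1 - l2)^-1 *: (x - l2 *: 1)).
Proof.
move=> tx dx.
have [t ht] := quad_root (\tr x) (- \det x).
set l1 := t; set l2 := \tr x - t.
have s12 : l1 + l2 = \tr x by rewrite /l1 /l2 addrC subrK.
have p12 : l1 * l2 = \det x by rewrite /l1 /l2 mulrBr -expr2 ht mulrC; ring.
have l1n : l1 != 0 by apply: contraNneq dx => l0; rewrite -p12 l0 mul0r.
have l2n : l2 != 0 by apply: contraNneq dx => l0; rewrite -p12 l0 mulr0.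
have l12 : l1 - l2 != 0.
  by rewrite /l1 /l2 opprB addrA addrr_pchar2 // add0r oppr_eq0.
set c := (l1 - l2)^-1.
set P := x - l2 *: 1.
set e1 := c *: P.
have PQ : P * (x - l1 *: 1) = 0.
  have := CHt x l2; rewrite -/P (_ : \tr x - l2 = l1) ?(mulrC l2) ?p12 ?subrr ?scale0r //.
  by rewrite -s12 addrK.
have PP : P * P = (l1 - l2) *: P.
  have hP : P = (x - l1 *: 1) + (l1 - l2) *: 1.
    by rewrite scalerBl addrA subrK.
  by rewrite {2}hP mulrDr PQ add0r -scalerAr mulr1.
have ee1 : e1 * e1 = e1.
  by rewrite /e1 -scalerAl -scalerAr PP !scalerA -mulrA /c mulVf ?mulr1.
exists e1, (1 - e1), l1, l2.
have xe : x = l1 *: e1 + l2 *: (1 - e1).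
  rewrite scalerBr addrCA -scalerBl /e1 scalerA mulfV // scale1r /P.
  by rewrite addrC subrK.
have trs k : \tr (k *: (1 : 'M[F]_2)) = 0.
  by rewrite mxtraceZ mxtrace1 (pcharf0 ch) mulr0.
split; [split|split; [split|]] => //.
- apply: contraNneq tx => e0; rewrite xe e0 scaler0 add0r subr0 trs //.
- apply: contraNneq tx => e0; rewrite xe e0 scaler0 addr0.
  have -> : e1 = 1 by move/eqP: e0; rewrite subr_eq0 => /eqP <-.
  by rewrite trs.
- by rewrite mulrBr mulr1 mulrBl mul1r ee1 subrr subr0.
- by rewrite addrC subrK.
- by apply: contra l12 => /eqP ->; rewrite subrr.
- by rewrite s12.
Qed.


Lemma ext_x (F : closedFieldType) (ch : 2%N \in [pchar F]) (x : 'M[F]_2) :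
  x != 0 -> idemfree <[x]> ->
  exists W : {vspace 'M[F]_2}, [/\ idemfree W, \dim W = 2 & x \in W].
Proof.
move=> xn hx.
have [tx0|txn] := eqVneq (\tr x) 0; last first.
  have dxn : \det x != 0.
    by apply: contra txn => /eqP d0; apply/eqP; exact: idem_tr hx (memv_line x) d0.
  have [e1 [e2 [l1 [l2 [[e1n e2n ee1 ee2 es] [[l12 l1n l2n _ xe] _]]]]]] := eigen ch txn dxn.
  exists (<[x]> + corner_space e1 e2)%VS; split.
  - by rewrite xe; exact: ii_idemfree.
  - by rewrite xe; exact: ii_dim.
  - by rewrite memvE addvSl.
have n1x := idem_one hx.
pose y : 'M[F]_2 := if x 1 0 == 0 then delta_mx 1 0 else delta_mx 0 1.
have yn : y != 0 by rewrite /y; case: ifP => _; exact: delta_neq0.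
have try : \tr y = 0 by rewrite /y; case: ifP => _; rewrite tr2 !mxE /= !simp.
have ind : forall k m : F, k *: x = m *: y -> k *: x = 0.
  move=> k m e; have h10 := congr1 (fun A : 'M[F]_2 => A 1 0) e; move: h10 => /=.
  move: e; rewrite /y; case: ifP => c0 e; rewrite !mxE /= !simp.
    by move/eqP: c0 => ->; rewrite mulr0 => m0; rewrite e -m0 scale0r.
  move/eqP; rewrite mulf_eq0 c0 orbF => /eqP ->.
  by rewrite scale0r.
exists (<[x]> + <[y]>)%VS; split.
- apply: idemfree_tr0.
    move=> b /memv_addP [u /vlineP [k ->] [v /vlineP [m ->] ->]].
    by rewrite mxtraceD !mxtraceZ tx0 try !mulr0 addr0.
  apply/negP => /memv_addP [u /vlineP [k ->] [v /vlineP [m ->] h1]].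
  have h10 := congr1 (fun A : 'M[F]_2 => A 1 0) h1; move: h10 => /=.
  move: h1; rewrite /y; case: ifP => c0 h1; rewrite !mxE /= !simp.
    move/eqP: c0 => ->; rewrite mulr0 add0r => m0.
    move/negP: n1x; apply; rewrite h1 -m0 scale0r addr0; exact: memvZ (memv_line x).
  move/esym/eqP; rewrite mulf_eq0 c0 orbF => /eqP k0.
  have h00 := congr1 (fun A : 'M[F]_2 => A 0 0) h1; move: h00 => /=.
  rewrite k0 !mxE /= !simp => /eqP; by rewrite oner_eq0.
- exact: dim_line2.
- by rewrite memvE addvSl.
Qed.

Lemma extend (F : closedFieldType) (ch : 2%N \in [pchar F]) (V : {vspace 'M[F]_2}) :
  idemfree V -> (\dim V < 2)%N ->
  exists W : {vspace 'M[F]_2}, [/\ idemfree W, \dim W = 2 & (V <= W)%VS].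
Proof.
move=> hV hd.
have [x [xn hx sVx]] : exists x : 'M[F]_2, [/\ x != 0, idemfree <[x]> & (V <= <[x]>)%VS].
  have [V0|Vn] := eqVneq V 0%VS.
    exists (delta_mx 0 1); split; first exact: delta_neq0.
      apply: idemfree_tr0.
        by move=> b /vlineP [k ->]; rewrite mxtraceZ tr2 !mxE /= !simp.
      apply/negP => /vlineP [k] /(congr1 (fun A : 'M[F]_2 => A 0 0)) /=.
      by rewrite !mxE /= !simp => /eqP; rewrite oner_eq0.
    by rewrite V0 sub0v.
  have xn : vpick V != 0 by rewrite vpick0.
  have sxV : (<[vpick V]> <= V)%VS by rewrite -memvE memv_pick.
  exists (vpick V); split => //; first exact: idemfree_sub sxV hV.
  have : (<[vpick V]> == V)%VS by rewrite eqEdim sxV dim_vline xn /=; move: hd; case: (\dim V) => [|[]].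
  by move/eqP ->.
have [W [hW dW xW]] := ext_x ch xn hx.
exists W; split => //; apply: subv_trans sVx _; by rewrite -memvE.
Qed.

Lemma finish (F : fieldType) (ch : 2%N \in [pchar F]) (V : {vspace 'M[F]_2}) (x y e1 e2 : 'M[F]_2) (l1 l2 : F) :
  \dim V = 2 -> x \in V -> y \in V -> \tr x != 0 -> \tr y = 0 -> y != 0 ->
  e1 * e1 = e1 -> e2 * e2 = e2 -> e1 + e2 = 1 -> e1 != 0 -> e2 != 0 ->
  l1 != l2 -> l1 != 0 -> l2 != 0 -> x = l1 *: e1 + l2 *: e2 ->
  y \in corner_space e1 e2 ->
  V = (<[l1 *: e1 + l2 *: e2]> + corner_space e1 e2)%VS.
Proof.
move=> dV xV yV tx ty yn ee1 ee2 es e1n e2n l12 l1n l2n xe yC.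
have dW := ii_dim ch ee1 ee2 es e1n e2n l12 l1n l2n.
rewrite -xe in dW *.
have xn : x != 0 by apply: contraNneq tx => ->; rewrite linear0.
have ind : forall k m : F, k *: x = m *: y -> k *: x = 0.
  move=> k m e; have := congr1 mxtrace e; rewrite !mxtraceZ ty mulr0 => /eqP.
  by rewrite mulf_eq0 (negPf tx) orbF => /eqP ->; rewrite scale0r.
have d := dim_line2 xn yn ind.
have UV : (<[x]> + <[y]> <= V)%VS by rewrite subv_add -!memvE xV yV.
have UW : (<[x]> + <[y]> <= <[x]> + corner_space e1 e2)%VS.
  rewrite subv_add -!memvE; apply/andP; split; first by rewrite memvE addvSl.
  by rewrite memvE; apply: subv_trans (addvSr _ _); rewrite -memvE.
have /eqP <- : (<[x]> + <[y]> == V)%VS by rewrite eqEdim UV d dV.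
by apply/eqP; rewrite eqEdim UW d dW.
Qed.

Lemma classify (F : closedFieldType) (ch : 2%N \in [pchar F]) (V : {vspace 'M[F]_2}) :
  idemfree V -> \dim V = 2 ->
  ( [/\ \dim V = 2%N, (forall b, b \in V -> \tr b = 0) & (1%:M : 'M[F]_2) \notin V ]
  \/
    exists (e1 e2 : 'M[F]_2) (l1 l2 : F),
      [/\ e1 != 0, e2 != 0, e1 * e1 = e1, e2 * e2 = e2 & e1 + e2 = 1] /\
      [/\ l1 != l2, l1 != 0, l2 != 0, l1 + l2 != 0 &
          V = (<[l1 *: e1 + l2 *: e2]> + corner_space e1 e2)%VS] ).
Proof.
move=> hV dV.
case: (classic (forall b, b \in V -> \tr b = 0)) => [htr|ntr].
  by left; split => //; exact: idem_one.
right.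
have [x xV tx] : exists2 x, x \in V & \tr x != 0.
  apply: NNPP => hn; apply: ntr => b bV; apply/eqP; apply: NNPP => hb.
  by apply: hn; exists b => //; apply/negP.
have dx : \det x != 0.
  by apply: contra tx => /eqP d0; apply/eqP; exact: idem_tr hV xV d0.
have [z zV zx] : exists2 z, z \in V & z \notin <[x]>%VS.
  apply/subvPn; apply/negP => sVx; have := dimvS sVx; rewrite dV dim_vline.
  by case: (x != 0).
set y := z - (\tr z / \tr x) *: x.
have yV : y \in V by rewrite memvB // memvZ.
have ty : \tr y = 0 by rewrite /y raddfB /= mxtraceZ divfK // subrr.
have yn : y != 0.
  apply: contraNneq zx => y0; apply/vlineP; exists (\tr z / \tr x).
  by apply/eqP; rewrite -subr_eq0 -/y y0.
clearbody y.
have noroot b : \det (x + b *: y) != 0.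
  apply: contra tx => /eqP d0; apply/eqP.
  have := idem_tr hV (memvD xV (memvZ b yV)) d0.
  by rewrite mxtraceD mxtraceZ ty mulr0 addr0.
have dy : \det y = 0.
  apply/eqP; apply/negP => /negP dyn.
  have [b hb] := quad_root (- ((\tr x * \tr y - \tr (x * y)) / \det y)) (- (\det x / \det y)).
  move: (noroot b); rewrite detD2; apply/negP/negPn/eqP.
  rewrite hb; field.
  done.
have txy : \tr (x * y) = 0.
  apply/eqP; apply/negP => /negP tn.
  move: (noroot (\det x / \tr (x * y))); rewrite detD2 dy ty mulr0 add0r mulr0 addr0.
  by rewrite mulrN divfK // subrr eqxx.
have [e1 [e2 [l1 [l2 [[e1n e2n ee1 ee2 es] [[l12 l1n l2n l12s xe] e1d]]]]]] := eigen ch tx dx.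
have de2 : e2 = 1 - e1 by rewrite -es addrC addKr.
have te1y : \tr (e1 * y) = 0.
  rewrite e1d -scalerAl mxtraceZ mulrBl -scalerAl mul1r raddfB /= mxtraceZ txy ty mulr0 subrr.
  by rewrite mulr0.
have te2y : \tr (e2 * y) = 0 by rewrite de2 mulrBl mul1r raddfB /= te1y ty subrr.
have e1n1 : e1 != 1 by apply: contraNneq e2n => e11; rewrite de2 e11 subrr.
have e2n1 : e2 != 1 by apply: contraNneq e1n => e21; rewrite -(addrK e2 e1) es e21 subrr.
have d1 := idem_det ee1 e1n1.
have d2 := idem_det ee2 e2n1.
have y1 : e1 * y * e1 = 0 by rewrite eze te1y d1 !scale0r subrr.
have y2 : e2 * y * e2 = 0 by rewrite eze te2y d2 !scale0r subrr.
have yy : y * y = 0 by rewrite CH2 ty dy !scale0r subrr.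
have k0 : e1 * y * e2 * y * e1 = 0.
  by rewrite de2 mulrBr mulr1 !mulrBl y1 !mul0r subr0 -(mulrA e1 y y) yy mulr0 mul0r.
have aMb : forall w, (e1 * y * e2) * w * (e2 * y * e1) = 0.
  move=> w; have h : e2 * w * e2 = \tr (e2 * w) *: e2 by rewrite eze d2 scale0r subr0.
  have -> : e1 * y * e2 * w * (e2 * y * e1) = e1 * y * (e2 * w * e2) * y * e1 by rewrite !mulrA.
  by rewrite h -scalerAr -!scalerAl k0 scaler0.
have h : (e1 + e2) * y * (e1 + e2) = e1 * y * e2 + e2 * y * e1.
  by rewrite !mulrDl !mulrDr y1 y2 add0r addr0.
rewrite es mul1r mulr1 in h.
have [a0|b0] : e1 * y * e2 = 0 \/ e2 * y * e1 = 0.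
  apply: NNPP => /not_or_and [] /eqP an /eqP bn; have [w] := prime2 an bn; by rewrite aMb eqxx.
  exists e2, e1, l2, l1; split; first by split => //; rewrite addrC.
  split; [by rewrite eq_sym | done | done | by rewrite addrC |].
  apply: (finish ch dV xV yV tx ty yn) => //.
  - by rewrite addrC.
  - by rewrite eq_sym.
  - by rewrite addrC.
  - by apply/cornerP; exists y; rewrite {1}h a0 add0r.
exists e1, e2, l1, l2; split; first by split.
split => //.
apply: (finish ch dV xV yV tx ty yn) => //.
by apply/cornerP; exists y; rewrite {1}h b0 addr0.
Qed.


Unset Implicit Arguments.

Theorem theorem3p6 (F : closedFieldType) (charF2 : 2%N \in [pchar F])
    (V : {vspace 'M[F]_2}) :
  maximal_mathieu_subspace V <->
  ( [/\ \dim V = 2%N, (forall b, b \in V -> \tr b = 0) & (1%:M : 'M[F]_2) \notin V ]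
  \/
    exists (e1 e2 : 'M[F]_2) (l1 l2 : F),
      [/\ e1 != 0, e2 != 0, e1 * e1 = e1, e2 * e2 = e2 & e1 + e2 = 1] /\
      [/\ l1 != l2, l1 != 0, l2 != 0, l1 + l2 != 0 &
          V = (<[l1 *: e1 + l2 *: e2]> + corner_space e1 e2)%VS] ).
Proof.
have nfull (W : {vspace 'M[F]_2}) : idemfree W -> W != fullv.
  by move=> hW; apply: contraNneq (idem_one hW) => ->; exact: memvf.
split.
  case=> hms hnf hmax; have hV := idemfree_of_ms hms hnf.
  apply: classify => //.
  apply/eqP; rewrite eqn_leq (no3 charF2 hV) /= leqNgt; apply/negP => hlt.
  have [W [hW dW sVW]] := extend charF2 hV hlt.
  have WV := hmax W (ms_of_idemfree hW) (nfull _ hW) sVW.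
  by move: hlt; rewrite -WV dW.
move=> h.
have [hV d2] : idemfree V /\ \dim V = 2.
  case: h => [[d2 htr n1]|[e1 [e2 [l1 [l2 [[e1n e2n ee1 ee2 es] [l12 l1n l2n _ EV]]]]]]].
    by split => //; exact: idemfree_tr0.
  by rewrite EV; split; [exact: ii_idemfree | exact: ii_dim].
split; [exact: ms_of_idemfree | exact: nfull |].
move=> W hms hnf sVW; have hW := idemfree_of_ms hms hnf.
by apply/eqP; rewrite eq_sym eqEdim sVW d2 (no3 charF2 hW).
Qed.
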